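(* In the censored multi-armed bandit setting, let $\lambda>0$, $\alpha>0$, $\delta\in(0,1]$, and let $\psi_\alpha$ be a primitive of $x\mapsto x^{-\alpha}$ on $(0,\infty)$. Then $$\sup_{\pi}\mathbb{E}[\mathbb V_\alpha(T,\pi)]\le\frac{d_{\mathrm{eff}}}{(1-\delta)^\alpha}\Big[\psi_\alpha\Big(\frac{T}{d_{\mathrm{eff}}}+\frac{\lambda}{1-\delta}\Big)-\psi_\alpha\Big(\frac{\lambda}{1-\delta}\Big)\Big]+\frac{24d_{\mathrm{eff}}\log T+d}{\lambda^\alpha}+\frac{4d_{\mathrm{eff}}}{\lambda^\alpha\delta^2T^{12\delta^2}},$$ where the supremum is over all policies (in particular over policies adapted to the censorship realizations), and $\mathbb V_\alpha(T,\pi)=\sum_{t=1}^T(N_{a_t}(t-1)+\lambda)^{-\alpha}$. (For $\delta=1$ the first term is interpreted via the stated expression only when $\delta<1$; the statement is intended for $\delta\in(0,1)$.)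
   Context: Censored multi-armed bandit setting. Fix an integer $d\ge 1$ (number of arms) and a horizon $T\ge 2$. Each arm $a\in[d]=\{1,\dots,d\}$ has an unknown mean reward $\theta^\star_a\in\mathbb{R}$. At each round $t=1,\dots,T$ a nonempty action set $\mathcal A_t\subseteq[d]$ is revealed (fixed in advance), the agent selects $a_t\in\mathcal A_t$, and a censorship indicator $x_{a_t}\sim\mathrm{Bernoulli}(p_{a_t})$ is drawn, independently of everything else given $a_t$, where $p_a\in(0,1]$ are fixed parameters; the feedback is observed iff $x_{a_t}=1$. A policy chooses $a_t$ as a (possibly randomized) function of the past (actions, censorship indicators, observed feedbacks). Let $N_a(t)=\#\{l\le t: a_l=a,\ x_{a_l}=1\}$. The effective dimension is $d_{\mathrm{eff}}=\sum_{a\in[d]}1/p_a$. *)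

(* Defs.v *)
From HB Require Import structures.
From mathcomp Require Import all_boot all_order all_algebra.
From mathcomp Require Import all_classical all_reals all_analysis.
Set Implicit Arguments. Unset Strict Implicit. Unset Printing Implicit Defensive.
Import Order.TTheory GRing.Theory Num.Theory.
Local Open Scope ring_scope.

(* A history is the sequence of (action, censorship indicator) pairs of the
   past rounds.  Round t (1-based) is preceded by a history of size t-1. *)
Definition history (d : nat) := seq ('I_d * bool).

(* N_a(h) : number of uncensored pulls of arm a in history h. *)
Definition Ncount (d : nat) (h : history d) (a : 'I_d) : nat :=
  count (fun u : 'I_d * bool => (u.1 == a) && u.2) h.

Definition bern {R : realType} (q : R) (x : bool) : R := if x then q else 1 - q.

(* A (randomized, behavioural) policy: pi h a = probability of choosing arm a
   after history h.  Validity on rounds 1..T w.r.t. the action sets A. *)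
Definition valid_policy {R : realType} (d T : nat) (A : nat -> {set 'I_d})
  (pi : history d -> 'I_d -> R) : Prop :=
  forall h : history d, (size h < T)%N ->
    (forall a, 0 <= pi h a) /\ (\sum_(a < d) pi h a = 1) /\
    (forall a, a \notin A (size h).+1 -> pi h a = 0).

Definition traj_prob {R : realType} (d T : nat) (p : 'I_d -> R)
  (pi : history d -> 'I_d -> R) (tau : T.-tuple ('I_d * bool)) : R :=
  \prod_(t < T) (pi (take t tau) (tnth tau t).1 *
                 bern (p (tnth tau t).1) (tnth tau t).2).

Definition Valpha {R : realType} (d T : nat) (lam alpha : R)
  (tau : T.-tuple ('I_d * bool)) : R :=
  \sum_(t < T) (((Ncount (take t tau) (tnth tau t).1)%:R + lam) `^ (- alpha)).

Definition expected_Valpha {R : realType} (d T : nat) (p : 'I_d -> R)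
  (pi : history d -> 'I_d -> R) (lam alpha : R) : R :=
  \sum_(tau : T.-tuple ('I_d * bool)) traj_prob p pi tau * Valpha lam alpha tau.

Definition deff {R : realType} (d : nat) (p : 'I_d -> R) : R :=
  \sum_(a < d) (p a)^-1.

(* Main.v *)
Require Import Defs.
From HB Require Import structures.
From mathcomp Require Import all_boot all_order all_algebra.
From mathcomp Require Import all_classical all_reals all_analysis.
From mathcomp Require Import ring lra.
Import Order.TTheory GRing.Theory Num.Theory.
Local Open Scope ring_scope.
Set Implicit Arguments. Unset Strict Implicit. Unset Printing Implicit Defensive.
Section Gen.
Variables (R : realType) (d : nat) (p : 'I_d -> R) (pi : history d -> 'I_d -> R).

Definition wt (h : history d) (x : 'I_d * bool) : R := pi h x.1 * bern (p x.1) x.2.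

Fixpoint Eh (h : history d) (m : nat) (Phi : history d -> R) : R :=
  match m with
  | 0 => Phi h
  | m'.+1 => \sum_(x : 'I_d * bool) wt h x * Eh (rcons h x) m' Phi
  end.

Lemma traj_Eh m : forall h Phi,
  \sum_(tau : m.-tuple ('I_d * bool))
     (\prod_(t < m) wt (h ++ take t tau) (tnth tau t)) * Phi (h ++ tau) = Eh h m Phi.
Proof.
elim: m => [|m IH] h Phi.
  rewrite (big_pred1 [tuple]) /=; last by move=> t; apply/esym/eqP/tuple0.
  by rewrite big_ord0 mul1r cats0.
rewrite (reindex (fun y : ('I_d * bool) * m.-tuple ('I_d * bool) => [tuple of y.1 :: y.2])) /=; last first.
  exists (fun t => (thead t, [tuple of behead t])) => [[x u] _|t _] /=.
    by rewrite theadE; congr pair; apply: val_inj.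
  by rewrite [RHS]tuple_eta.
rewrite -(pair_bigA _ (fun (x : 'I_d * bool) (u : m.-tuple ('I_d * bool)) => (\prod_(t < m.+1) wt (h ++ take t [tuple of x :: u])
     (tnth [tuple of x :: u] t)) * Phi (h ++ [tuple of x :: u]))) /=.
apply: eq_bigr => x _.
rewrite -IH mulr_sumr; apply: eq_bigr => u _.
rewrite big_ord_recl tnth0 /= cats0 -mulrA; congr (_ * _).
rewrite cat_rcons; congr (_ * _); apply: eq_bigr => i _.
by rewrite tnthS /= cat_rcons.
Qed.

Variables (T : nat) (A : nat -> {set 'I_d}).
Hypothesis hp : forall a, 0 < p a <= 1.
Hypothesis hpi : valid_policy T A pi.

Lemma bern_ge0 a b : 0 <= bern (p a) b.
Proof. by have /andP[h1 h2] := hp a; case: b; rewrite /bern ?subr_ge0 // ltW. Qed.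

Lemma wt_ge0 h x : (size h < T)%N -> 0 <= wt h x.
Proof.
move=> hs; have [h1 _] := hpi hs; apply: mulr_ge0 => //; exact: bern_ge0.
Qed.

Lemma sum_pair (F : 'I_d * bool -> R) :
  \sum_(x : 'I_d * bool) F x = \sum_(a < d) (F (a, true) + F (a, false)).
Proof.
rewrite (eq_bigr (fun x => F (x.1, x.2))); last by case.
rewrite -(pair_bigA _ (fun (a : 'I_d) (b : bool) => F (a, b))) /=.
by apply: eq_bigr => a _; rewrite big_bool.
Qed.

Lemma wt_sum h : (size h < T)%N -> \sum_x wt h x = 1.
Proof.
move=> hs; have [_ [h2 _]] := hpi hs; rewrite sum_pair -h2.
by apply: eq_bigr => a _; rewrite /wt /= -mulrDr /bern subrKC mulr1.
Qed.

Lemma Eh_const m : forall h c, (size h + m <= T)%N -> Eh h m (fun _ => c) = c.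
Proof.
elim: m => [//|m IH] h c hs /=.
under eq_bigr => x _ do rewrite IH ?size_rcons ?addSnnS //.
by rewrite -mulr_suml wt_sum ?mul1r //; apply: leq_trans hs; rewrite -addSnnS leq_addr.
Qed.

Lemma Eh_le m : forall h Phi Psi, (size h + m <= T)%N ->
  (forall s, size s = (size h + m)%N -> Phi s <= Psi s) -> Eh h m Phi <= Eh h m Psi.
Proof.
elim: m => [|m IH] h Phi Psi hs H /=; first by apply: H; rewrite addn0.
apply: ler_sum => x _; apply: ler_wpM2l.
  by apply: wt_ge0; apply: leq_trans hs; rewrite -addSnnS leq_addr.
apply: IH; first by rewrite size_rcons addSnnS.
by move=> s; rewrite size_rcons addSnnS; apply: H.
Qed.

Lemma Eh_add m : forall h Phi Psi,
  Eh h m (fun s => Phi s + Psi s) = Eh h m Phi + Eh h m Psi.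
Proof.
elim: m => [//|m IH] h Phi Psi /=.
by rewrite -big_split /=; apply: eq_bigr => x _; rewrite IH mulrDr.
Qed.

Lemma Eh_scale m : forall h c Phi, Eh h m (fun s => c * Phi s) = c * Eh h m Phi.
Proof.
elim: m => [//|m IH] h c Phi /=.
by rewrite mulr_sumr; apply: eq_bigr => x _; rewrite IH mulrCA.
Qed.

Lemma Eh_sum m : forall h (F : 'I_d -> history d -> R),
  Eh h m (fun s => \sum_(a < d) F a s) = \sum_(a < d) Eh h m (F a).
Proof.
elim: m => [//|m IH] h F /=.
rewrite exchange_big /=; apply: eq_bigr => x _; rewrite IH mulr_sumr //.
Qed.
End Gen.
Section Hist.
Variables (R : realType) (d : nat).

Fixpoint psum_aux (G : history d -> 'I_d * bool -> R) (acc s : history d) : R :=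
  match s with [::] => 0 | x :: s' => G acc x + psum_aux G (rcons acc x) s' end.
Definition psum G s := psum_aux G [::] s.

Lemma psum_aux_rcons G s : forall acc x,
  psum_aux G acc (rcons s x) = psum_aux G acc s + G (acc ++ s) x.
Proof.
elim: s => [|y s IH] acc x /=; first by rewrite addr0 add0r cats0.
by rewrite IH addrA cat_rcons.
Qed.

Lemma psum_rcons G s x : psum G (rcons s x) = psum G s + G s x.
Proof. by rewrite /psum psum_aux_rcons. Qed.

Lemma psum_nil G : psum G [::] = 0. Proof. by []. Qed.

Lemma psum_tuple G m : forall acc (tau : m.-tuple ('I_d * bool)),
  \sum_(t < m) G (acc ++ take t tau) (tnth tau t) = psum_aux G acc tau.
Proof.
elim: m => [|m IH] acc tau.
  by rewrite big_ord0 (tuple0 tau).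
case: tau => [[|x u] //= hu].
rewrite big_ord_recl take0 cats0 -(IH _ (Tuple hu)); congr (_ + _).
apply: eq_bigr => i _.
rewrite !(tnth_nth x) /= cat_rcons.
by rewrite add0n.
Qed.

Definition cnt (a : 'I_d) (s : history d) : nat := count (fun u : 'I_d * bool => u.1 == a) s.

Lemma cnt_rcons (a : 'I_d) (s : history d) (x : 'I_d * bool) : cnt a (rcons s x) = (cnt a s + (x.1 == a))%N.
Proof. by rewrite /cnt -cats1 count_cat /= addn0. Qed.

Lemma Ncount_rcons (a : 'I_d) (s : history d) (x : 'I_d * bool) : Ncount (rcons s x) a = (Ncount s a + ((x.1 == a) && x.2))%N.
Proof. by rewrite /Ncount -cats1 count_cat /= addn0. Qed.

Lemma sum_ind (b : 'I_d) (Y : 'I_d -> R) : \sum_(a < d) (b == a)%:R * Y a = Y b.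
Proof.
rewrite (bigD1 b) //= eqxx mul1r big1 ?addr0 // => a ab.
by rewrite eq_sym (negbTE ab) mul0r.
Qed.

Lemma sum_cnt s : \sum_(a < d) (cnt a s)%:R = (size s)%:R :> R.
Proof.
elim/last_ind: s => [|s x IH]; first by rewrite big1.
rewrite size_rcons -addn1 natrD -IH.
under eq_bigr => a _ do rewrite cnt_rcons natrD.
rewrite big_split /=; congr (_ + _).
rewrite (bigD1 x.1) //= eqxx big1 ?addr0 // => a ha.
by rewrite eq_sym (negbTE ha).
Qed.

Lemma regroup (F : 'I_d -> nat -> R) s :
  psum (fun h x => F x.1 (cnt x.1 h)) s = \sum_(a < d) \sum_(k < cnt a s) F a k.
Proof.
elim/last_ind: s => [|s x IH]; first by rewrite psum_nil big1 // => a _; rewrite big_ord0.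
rewrite psum_rcons IH -(sum_ind x.1 (fun a => F a (cnt a s))) -big_split /=.
apply: eq_bigr => a _; rewrite cnt_rcons.
case: (x.1 == a); last by rewrite addn0 mul0r addr0.
by rewrite addn1 big_ord_recr /= mul1r.
Qed.
End Hist.
Section Ana.
Variable R : realType.
Lemma mvt_le (f df : R -> R) (a b : R) : a < b ->
  (forall x, a <= x <= b -> is_derive x 1 f (df x)) ->
  exists2 c, a < c < b & f b - f a = df c * (b - a).
Proof.
move=> ab H.
have [||c cab E] := @MVT R f df a b ab.
- move=> x; rewrite in_itv /= => /andP[h1 h2]; apply: H; rewrite !ltW //.
- apply: derivable_within_continuous => x; rewrite in_itv /= => xab.
  by have := H x xab => -[].
by exists c => //; move: cab; rewrite in_itv.
Qed.
Lemma exp_bound (x : R) : 0 <= x -> expR (- x) <= 1 - x + x ^+ 2 / 2.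
Proof.
move=> x0.
pose g : R -> R := fun y => 1 - y + y ^+ 2 / 2.
have Dg (y : R) : is_derive y 1 g (y - 1).
  have h1 : is_derive y 1 (fun y : R => y ^+ 2 / 2) y.
    by apply: is_derive_eq; rewrite // !scaler0 add0r /GRing.scale /=; field.
  have h2 : is_derive y 1 (fun y : R => 1 - y) (-1).
    by apply: is_derive_eq; rewrite // add0r mul1r.
  have h3 := is_deriveD h2 h1.
  have E : g = (fun y : R => 1 - y) + (fun y : R => y ^+ 2 / 2) by apply/funext => z.
  have -> : y - 1 = -1 + y by ring.
  by rewrite E.
pose phi : R -> R := (@expR R) * g.
have Dphi (y : R) : is_derive y 1 phi (expR y * (y ^+ 2 / 2)).
  have h4 := is_deriveM (is_derive_expR y) (Dg y).
  have -> : expR y * (y ^+ 2 / 2) = expR y *: (y - 1) + g y *: expR y.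
    by rewrite /GRing.scale /= /g; field.
  exact: h4.
have phiE y : phi y = expR y * g y by [].
have P0 : phi 0 = 1 by rewrite phiE /g expR0 mul1r expr0n /= mul0r subr0 addr0.
have key : 1 <= phi x.
  case: (ltrP 0 x) => [xp|x0']; last first.
    have -> : x = 0 by apply/le_anti; rewrite x0 x0'.
    by rewrite P0.
  have [c /andP[c0 cx] E] := @mvt_le phi (fun y => expR y * (y ^+ 2 / 2)) 0 x xp
     (fun y _ => Dphi y).
  rewrite -subr_ge0 -P0 E; apply: mulr_ge0; last by rewrite subr0 ltW.
  by apply: mulr_ge0; [exact: expR_ge0 | apply: divr_ge0; [apply: sqr_ge0|]].
rewrite expRN; move: key; rewrite phiE => key.
have gp : 0 < g x by rewrite /g; nra.
rewrite -[_ + _ + _]/(g x) -[(expR x)^-1]mulr1 ler_pdivrMl ?expR_gt0 //.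
Qed.

Variables (alpha : R) (psi : R -> R).
Hypothesis halpha : 0 < alpha.
Hypothesis hpsi : forall x : R, 0 < x -> is_derive x 1 psi (x `^ (- alpha)).

Lemma rpow_anti (x y : R) : 0 < x -> x <= y -> y `^ (- alpha) <= x `^ (- alpha).
Proof.
move=> x0 xy; have y0 : 0 < y by exact: lt_le_trans xy.
rewrite !powRN lef_pV2 ?posrE ?powR_gt0 //.
by apply: (ge0_ler_powR (ltW halpha)) => //; rewrite nnegrE ltW.
Qed.

Lemma mvt_psi (u v : R) : 0 < u -> u < v ->
  exists2 c, u < c < v & psi v - psi u = c `^ (- alpha) * (v - u).
Proof.
move=> u0 uv; apply: mvt_le => // x /andP[ux _]; apply: hpsi; exact: lt_le_trans ux.
Qed.

Lemma psi_step (u v : R) : 0 < u -> u <= v -> v `^ (- alpha) * (v - u) <= psi v - psi u.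
Proof.
move=> u0; rewrite le_eqVlt => /orP[/eqP->|uv]; first by rewrite !subrr mulr0.
have [c /andP[uc cv] ->] := mvt_psi u0 uv.
apply: ler_wpM2r; first by rewrite subr_ge0 ltW.
by apply: rpow_anti; [exact: lt_trans uc | exact: ltW].
Qed.

Lemma psi_incr (u v : R) : 0 < u -> u <= v -> psi u <= psi v.
Proof.
move=> u0 uv; rewrite -subr_ge0; apply: le_trans (psi_step u0 uv).
by apply: mulr_ge0; [exact: powR_ge0 | rewrite subr_ge0].
Qed.

Lemma psi_tangent (u v : R) : 0 < u -> 0 < v -> psi u - psi v <= v `^ (- alpha) * (u - v).
Proof.
move=> u0 v0; case: (ltgtP u v) => [uv|vu|->]; last by rewrite !subrr mulr0.
- have [c /andP[uc cv] E] := mvt_psi u0 uv.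
  rewrite -opprB E -(opprB v u) mulrN lerN2.
  apply: ler_wpM2r; first by rewrite subr_ge0 ltW.
  by apply: rpow_anti; [exact: lt_trans uc | exact: ltW].
- have [c /andP[vc cu] ->] := mvt_psi v0 vu.
  apply: ler_wpM2r; first by rewrite subr_ge0 ltW.
  by apply: rpow_anti => //; exact: ltW.
Qed.
End Ana.

Section Main.
Variables (R : realType) (d T : nat) (p : 'I_d -> R) (A : nat -> {set 'I_d})
  (lam alpha delta : R) (psi : R -> R) (pi : history d -> 'I_d -> R).
Hypotheses (hd : (0 < d)%N) (hT : (2 <= T)%N) (hp : forall a, 0 < p a <= 1)
  (hlam : 0 < lam) (halpha : 0 < alpha) (hdelta : 0 < delta < 1)
  (hpsi : forall x : R, 0 < x -> is_derive x 1 psi (x `^ (- alpha)))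
  (hpi : valid_policy T A pi).

Definition L := lam / (1 - delta).
Definition il := (lam `^ alpha)^-1.
Definition f (a : 'I_d) (k : nat) := ((1 - delta) * p a * k%:R + lam) `^ (- alpha).
Definition Cd := ((1 - delta) `^ alpha)^-1.
Definition G (a : 'I_d) (y : R) := Cd / p a * psi (p a * y + L).
Definition K (a : 'I_d) := 24 * ln T%:R / p a.
Definition ind2 (a : 'I_d) (k : nat) : R := ((1 <= k)%N && (k%:R < K a)%R)%:R.
Definition cc (a : 'I_d) := p a * (1 - expR (- delta)).
Definition W (a : 'I_d) (h : history d) :=
  expR (- delta * (Ncount h a)%:R + cc a * (cnt a h)%:R).
Definition r (a : 'I_d) := delta ^+ 2 * p a / 2.
Definition w (a : 'I_d) (k : nat) : R := (K a <= k%:R)%R%:R * expR (- (r a * k%:R)).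
Definition gV (h : history d) (x : 'I_d * bool) :=
  ((Ncount h x.1)%:R + lam) `^ (- alpha).

Lemma pa_gt0 a : 0 < p a. Proof. by case/andP: (hp a). Qed.
Lemma pa_le1 a : p a <= 1. Proof. by case/andP: (hp a). Qed.
Lemma d_gt0 : 0 < delta. Proof. by case/andP: hdelta. Qed.
Lemma d_lt1 : delta < 1. Proof. by case/andP: hdelta. Qed.
Lemma il_ge0 : 0 <= il. Proof. by rewrite /il invr_ge0 powR_ge0. Qed.
Lemma il_E : lam `^ (- alpha) = il. Proof. by rewrite powRN. Qed.
Lemma f_ge0 a k : 0 <= f a k. Proof. exact: powR_ge0. Qed.
Lemma ind2_ge0 a k : 0 <= ind2 a k. Proof. exact: ler0n. Qed.
Lemma W_ge0 a h : 0 <= W a h. Proof. exact: expR_ge0. Qed.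
Lemma w_ge0 a k : 0 <= w a k.
Proof. by rewrite /w; apply: mulr_ge0; [exact: ler0n | exact: expR_ge0]. Qed.

Lemma cc_ge a : p a * (delta - delta ^+ 2 / 2) <= cc a.
Proof.
rewrite /cc; apply: ler_wpM2l; first exact: ltW (pa_gt0 a).
have := exp_bound (ltW d_gt0); lra.
Qed.

Lemma step h x : gV h x <=
  f x.1 (cnt x.1 h) + il * (ind2 x.1 (cnt x.1 h) + W x.1 h * w x.1 (cnt x.1 h)).
Proof.
set b := x.1; set k := cnt b h; set N : R := (Ncount h b)%:R.
have N0 : 0 <= N by rewrite /N ler0n.
have k0 : 0 <= k%:R :> R by rewrite ler0n.
have pb := pa_gt0 b; have dl := d_lt1; have dg := d_gt0.
have Hr : 0 <= il * (ind2 b k + W b h * w b k).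
  apply: mulr_ge0; first exact: il_ge0.
  by apply: addr_ge0; [exact: ind2_ge0 | apply: mulr_ge0; [exact: W_ge0|exact: w_ge0]].
case: (lerP ((1 - delta) * p b * k%:R) N) => hN.
  rewrite -[gV h x]addr0; apply: lerD => //; rewrite /gV /f.
  apply: rpow_anti => //; last by rewrite lerD2r.
  apply: ltr_pwDr => //; apply: mulr_ge0 => //; apply: mulr_ge0; lra.
have Hg : gV h x <= il by rewrite /gV -il_E; apply: rpow_anti => //; rewrite lerDr.
apply: (le_trans Hg); rewrite -{1}[il]add0r; apply: lerD; first exact: f_ge0.
rewrite -[X in X <= _]mulr1; apply: ler_wpM2l; first exact: il_ge0.
have k1 : (1 <= k)%N.
  clear Hr Hg; case: k hN k0 => // hN _; rewrite mulr0 in hN; lra.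
case: (ltrP (k%:R) (K b)) => hK.
  rewrite /ind2 k1 hK /=; rewrite lerDl; apply: mulr_ge0; [exact: W_ge0|exact: w_ge0].
rewrite -{1}[1]add0r; apply: lerD; first exact: ind2_ge0.
rewrite /W /w hK mul1r -expRD; apply: le_trans (expR_ge1Dx _); rewrite lerDl.
have h1 := cc_ge b.
have h2 : cc b * k%:R >= p b * (delta - delta ^+ 2 / 2) * k%:R by apply: ler_wpM2r.
have h3 : delta * N <= delta * ((1 - delta) * p b * k%:R) by apply: ler_wpM2l; lra.
rewrite /r -/N -/k; lra.
Qed.

Definition Phi1 (s : history d) := psum (fun h x => f x.1 (cnt x.1 h)) s.
Definition Phi2 (a : 'I_d) (s : history d) :=
  psum (fun h x => (fun b k => (b == a)%:R * ind2 a k) x.1 (cnt x.1 h)) s.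
Definition Phi3 (a : 'I_d) (s : history d) :=
  psum (fun h x => (x.1 == a)%:R * (W a h * w a (cnt a h))) s.

Lemma V_le s : psum gV s <= Phi1 s + il * \sum_(a < d) (Phi2 a s + Phi3 a s).
Proof.
elim/last_ind: s => [|s x IH].
  by rewrite /Phi1 !psum_nil big1 ?mulr0 ?addr0 // => a _; rewrite /Phi2 /Phi3 !psum_nil addr0.
have E : \sum_(a < d) (Phi2 a (rcons s x) + Phi3 a (rcons s x)) =
   \sum_(a < d) (Phi2 a s + Phi3 a s) +
   (ind2 x.1 (cnt x.1 s) + W x.1 s * w x.1 (cnt x.1 s)).
  rewrite -(sum_ind x.1 (fun a => ind2 a (cnt x.1 s) + W a s * w a (cnt a s))) -big_split /=.
  apply: eq_bigr => a _; rewrite /Phi2 /Phi3 !psum_rcons /=.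
  ring.
rewrite E psum_rcons /Phi1 psum_rcons.
have := step s x; rewrite -/(Phi1 s).
move: IH; rewrite -/(Phi1 s) => IH st.
have H := lerD IH st.
apply: le_trans H _; lra.
Qed.

Lemma K_gt0 a : 0 < K a.
Proof.
rewrite /K; apply: divr_gt0; last exact: pa_gt0.
apply: mulr_gt0 => //; apply: ln_gt0; rewrite ltr1n; exact: hT.
Qed.

Lemma ind_count a n : \sum_(k < n) ind2 a k <= K a.
Proof.
suff: \sum_(k < n) ind2 a k <= (n.-1)%:R /\ \sum_(k < n) ind2 a k <= K a by case.
elim: n => [|n [IH1 IH2]]; first by rewrite big_ord0 lexx ltW ?K_gt0.
rewrite big_ord_recr /= /ind2.
case E: ((1 <= n)%N && (n%:R < K a)%R); last first.
  rewrite addr0; split => //; apply: le_trans IH1 _; rewrite ler_nat; exact: leq_pred.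
move/andP: E => [n1 nK].
case: n n1 nK IH1 IH2 => // n _ nK IH1 IH2 /=.
have H1 : \sum_(i < n.+1) ind2 a i + 1 <= n.+1%:R by rewrite -natr1; apply: lerD.
by split => //; apply: le_trans H1 (ltW nK).
Qed.

Lemma Phi2_le a s : Phi2 a s <= K a.
Proof.
rewrite /Phi2 (regroup (fun b k => (b == a)%:R * ind2 a k)).
under eq_bigr => b _ do rewrite -mulr_sumr eq_sym.
by rewrite sum_ind; apply: ind_count.
Qed.

Lemma eqle (x y : R) : x = y -> x <= y. Proof. by move=> ->. Qed.

Lemma L_gt0 : 0 < L.
Proof. by rewrite /L divr_gt0 // subr_gt0 d_lt1. Qed.

Lemma Cd_ge0 : 0 <= Cd. Proof. by rewrite /Cd invr_ge0 powR_ge0. Qed.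

Lemma deff_gt0 : 0 < deff p.
Proof.
rewrite /deff (bigD1 (Ordinal hd)) //=; apply: ltr_wpDr.
  by apply: sumr_ge0 => a _; rewrite invr_ge0 ltW ?pa_gt0.
by rewrite invr_gt0 pa_gt0.
Qed.

Lemma f0 a : f a 0 = il.
Proof. by rewrite /f mulr0 add0r il_E. Qed.

Lemma G_incr a (y z : R) : 0 <= y -> y <= z -> G a y <= G a z.
Proof.
move=> y0 yz; rewrite /G; apply: ler_wpM2l.
  by apply: mulr_ge0; [exact: Cd_ge0 | rewrite invr_ge0 ltW ?pa_gt0].
have pa := pa_gt0 a; have := L_gt0 => L0.
apply: psi_incr => //; first by apply: ltr_wpDl => //; apply: mulr_ge0 => //; exact: ltW.
by rewrite lerD2r ler_wpM2l // ltW.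
Qed.

Lemma f_step a k : f a k.+1 <= G a k.+1%:R - G a k%:R.
Proof.
have pa := pa_gt0 a; have L0 := L_gt0; have dl := d_lt1.
set u := p a * k%:R + L; set v := p a * k.+1%:R + L.
have u0 : 0 < u by rewrite /u ltr_wpDl // mulr_ge0 // ltW.
have uv : u <= v by rewrite /u /v lerD2r ler_pM2l // ler_nat.
have H := psi_step halpha hpsi u0 uv.
have vu : v - u = p a by rewrite /u /v -natr1; ring.
rewrite /G -/u -/v -mulrBr.
have -> : f a k.+1 = Cd * v `^ (- alpha).
  rewrite /f /Cd -powRN -powRM ?subr_ge0 ?ltW //; last by apply: lt_le_trans uv.
  congr (_ `^ _); rewrite /v /L; field; rewrite subr_eq0; apply/eqP => h1; lra.
have Cp : 0 <= Cd / p a by apply: divr_ge0; [exact: Cd_ge0 | exact: ltW].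
apply: le_trans _ (ler_wpM2l Cp H).
by rewrite vu (mulrC (v `^ _)) mulrA divfK ?lt0r_neq0.
Qed.

Lemma f_sum a n : \sum_(k < n) f a k <= il + (G a n%:R - G a 0).
Proof.
have H m : \sum_(k < m.+1) f a k <= il + (G a m%:R - G a 0).
  elim: m => [|m IH]; first by rewrite big_ord1 /= f0 subrr addr0.
  rewrite big_ord_recr /=; have := f_step a m; lra.
case: n => [|n]; first by rewrite big_ord0 subrr addr0 il_ge0.
apply: le_trans (H n) _; rewrite lerD2l lerD2r; apply: G_incr; rewrite ?ler0n // ler_nat leqnSn //.
Qed.

Lemma G_concave (n : nat) a (M : R) : 0 < M ->
  G a n%:R - G a 0 <= Cd * M `^ (- alpha) * n%:R +
     Cd * (M `^ (- alpha) * (L - M) + (psi M - psi L)) * (p a)^-1.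
Proof.
move=> M0; have pa := pa_gt0 a; have L0 := L_gt0.
have u0 : 0 < p a * n%:R + L by rewrite ltr_wpDl // mulr_ge0 // ltW.
have H := psi_tangent halpha hpsi u0 M0.
rewrite /G mulr0 add0r -mulrBr.
have Cp : 0 <= Cd / p a by apply: divr_ge0; [exact: Cd_ge0 | exact: ltW].
have H2 : psi (p a * n%:R + L) - psi L <=
   M `^ (- alpha) * (p a * n%:R + L - M) + (psi M - psi L) by lra.
apply: le_trans (ler_wpM2l Cp H2) _.
apply: eqle; field; exact: lt0r_neq0.
Qed.

Lemma sum_cnt_T s : size s = T -> \sum_(a < d) (cnt a s)%:R = T%:R :> R.
Proof. by move=> hs; rewrite sum_cnt hs. Qed.

Lemma Phi1_le s : size s = T ->
  Phi1 s <= d%:R * il + Cd * deff p * (psi (T%:R / deff p + L) - psi L).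
Proof.
move=> hs; set M := T%:R / deff p + L.
have D0 := deff_gt0; have L0 := L_gt0.
have M0 : 0 < M by rewrite /M ltr_wpDl // divr_ge0 // ?ler0n // ltW.
rewrite /Phi1 (regroup (fun b k => f b k)).
apply: le_trans (ler_sum _ (fun a _ => f_sum a (cnt a s))) _.
rewrite big_split /= sumr_const card_ord; apply: lerD; first by rewrite mulr_natl.
apply: le_trans (ler_sum _ (fun a _ => G_concave (cnt a s) a M0)) _.
rewrite big_split /= -mulr_sumr -mulr_sumr sum_cnt_T // -/(deff p).
rewrite /M; apply: eqle; field; exact: lt0r_neq0.
Qed.

Definition S (a : 'I_d) (k m : nat) := \sum_(i < m) w a (k + i).

Lemma S_ge0 a k m : 0 <= S a k m.
Proof. by apply: sumr_ge0 => i _; exact: w_ge0. Qed.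

Lemma S_mono a k m : S a k m <= S a k m.+1.
Proof. by rewrite /S big_ord_recr /= lerDl w_ge0. Qed.

Lemma S_rec a k m : S a k m.+1 = w a k + S a k.+1 m.
Proof.
rewrite /S big_ord_recl /= addn0; congr (_ + _).
by apply: eq_bigr => i _; rewrite addSnnS.
Qed.

Lemma W_same a h (x : 'I_d * bool) : x.1 != a -> W a (rcons h x) = W a h.
Proof.
move=> /negbTE xa; rewrite /W Ncount_rcons cnt_rcons xa /= !addn0 //.
Qed.

Lemma Phi3_rcons a h x :
  Phi3 a (rcons h x) = Phi3 a h + (x.1 == a)%:R * (W a h * w a (cnt a h)).
Proof. by rewrite /Phi3 psum_rcons. Qed.

Lemma W_bern a h :
  bern (p a) true * W a (rcons h (a, true)) + bern (p a) false * W a (rcons h (a, false))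
  <= W a h.
Proof.
rewrite /W !Ncount_rcons !cnt_rcons /= eqxx /= !natrD /= addr0.
set N := (Ncount h a)%:R; set k := (cnt a h)%:R.
have -> : - delta * (N + 1) + cc a * (k + 1) = (- delta * N + cc a * k) + (cc a - delta) by ring.
have -> : - delta * N + cc a * (k + 1) = (- delta * N + cc a * k) + cc a by ring.
rewrite [expR (_ + (cc a - delta))]expRD [expR (_ + cc a)]expRD /bern.
set E := expR (- delta * N + cc a * k).
have E0 : 0 <= E by exact: expR_ge0.
have key : p a * expR (cc a - delta) + (1 - p a) * expR (cc a) <= 1.
  rewrite expRD.
  have h1 := expR_ge1Dx (- cc a).
  have h2 : expR (cc a) * expR (- cc a) = 1 by rewrite -expRD subrr expR0.
  have ec := expR_gt0 (cc a).
  have : p a * (expR (cc a) * expR (- delta)) + (1 - p a) * expR (cc a)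
     = expR (cc a) * (1 - cc a) by rewrite [in RHS]/cc; ring.
  move=> ->; rewrite -h2; apply: ler_wpM2l; [exact: ltW | lra].
have := ler_wpM2l E0 key; rewrite mulr1 => H.
apply: le_trans H; apply: eqle; ring.
Qed.

Lemma super a m : forall h, (size h + m <= T)%N ->
  Eh p pi h m (Phi3 a) <= Phi3 a h + W a h * S a (cnt a h) m.
Proof.
elim: m => [|m IH] h hs /=; first by rewrite /S big_ord0 mulr0 addr0.
have hs' : (size h < T)%N by apply: leq_trans hs; rewrite -addSnnS leq_addr.
have IH' x : Eh p pi (rcons h x) m (Phi3 a) <=
    Phi3 a (rcons h x) + W a (rcons h x) * S a (cnt a (rcons h x)) m.
  by apply: IH; rewrite size_rcons addSnnS.
apply: le_trans (ler_sum _ (fun x _ => ler_wpM2l (wt_ge0 hp hpi x hs') (IH' x))) _.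
rewrite sum_pair.
have hpi' := hpi hs'; case: hpi' => [pi0 [pisum _]].
rewrite -[X in _ <= X]mul1r -pisum mulr_suml.
apply: ler_sum => b _.
rewrite /wt /= !Phi3_rcons /= !cnt_rcons /= -!mulrA -mulrDr.
apply: ler_wpM2l; first exact: pi0.
have bt := bern_ge0 hp b true; have bf := bern_ge0 hp b false.
have bs : bern (p b) true + bern (p b) false = 1 by rewrite /bern; ring.
have Wh := W_ge0 a h; have wk := w_ge0 a (cnt a h).
case: (eqVneq b a) => [->|ba].
  rewrite (_ : (cnt a h + true)%N = (cnt a h).+1) ?addn1 // S_rec.
  rewrite (_ : true%:R = 1 :> R) // mul1r.
  have := W_bern a h; rewrite /bern => HW.
  have S0 := S_ge0 a (cnt a h).+1 m.
  have HW2 := ler_wpM2r S0 HW.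
  have pa := pa_le1 a.
  lra.
rewrite (_ : (cnt a h + false)%N = cnt a h) ?addn0 // !W_same //.
rewrite (_ : false%:R = 0 :> R) // mul0r !addr0.
have := S_mono a (cnt a h) m; have := S_ge0 a (cnt a h) m.
move=> S0 Sm; have HS := ler_wpM2l Wh Sm.
lra.
Qed.

Lemma r_gt0 a : 0 < r a.
Proof. by rewrite /r divr_gt0 // mulr_gt0 ?pa_gt0 // exprn_gt0 // d_gt0. Qed.

Lemma r_le1 a : r a <= 1.
Proof.
have := pa_le1 a; have := pa_gt0 a; have := d_lt1; have := d_gt0.
rewrite /r => h1 h2 h3 h4; nra.
Qed.

Lemma geo a n : (\sum_(i < n) w a (0 + i)) * (1 - expR (- r a)) <=
  expR (- (r a * K a)) - (if (K a <= n%:R) then expR (- (r a * n%:R)) else expR (- (r a * K a))).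
Proof.
have K0 := K_gt0 a; have r0 := r_gt0 a.
elim: n => [|n IH].
  by rewrite big_ord0 mul0r (lt_geF K0) subrr.
rewrite big_ord_recr /= /w add0n.
have eq1 : expR (- (r a * n%:R)) * expR (- r a) = expR (- (r a * n.+1%:R)).
  by rewrite -expRD -natr1; congr expR; ring.
case: (lerP (K a) n%:R) => hK.
  have hK1 : K a <= n.+1%:R by apply: le_trans hK _; rewrite ler_nat.
  rewrite hK1 /= mul1r; move: IH; rewrite hK => IH.
  rewrite mulrDl; have := eq1; lra.
rewrite /= mul0r addr0.
rewrite (lt_geF hK) subrr in IH.
case: (lerP (K a) n.+1%:R) => hK1; last by rewrite subrr.
apply: (le_trans IH).
by rewrite subr_ge0 ler_expR lerN2 ler_wpM2l // ltW.
Qed.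

Lemma w_sum a : S a 0 T <= 4 / (delta ^+ 2 * p a * T%:R `^ (12 * delta ^+ 2)).
Proof.
have K0 := K_gt0 a; have r0 := r_gt0 a; have r1 := r_le1 a.
have pa := pa_gt0 a; have dg := d_gt0.
have hq : r a / 2 <= 1 - expR (- r a) by have := exp_bound (ltW r0); nra.
have q0 : 0 < 1 - expR (- r a) by apply: lt_le_trans hq; rewrite divr_gt0.
have H := geo a T.
have H2 : S a 0 T * (1 - expR (- r a)) <= expR (- (r a * K a)).
  apply: le_trans H _; rewrite lerBlDr lerDl; case: ifP => _; exact: expR_ge0.
have H3 : S a 0 T <= expR (- (r a * K a)) / (1 - expR (- r a)).
  by rewrite ler_pdivlMr.
apply: le_trans H3 _.
have T0 : (0 < T%:R :> R) by rewrite ltr0n; apply: leq_trans hT.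
have E : r a * K a = 12 * delta ^+ 2 * ln T%:R.
  by rewrite /r /K; field; apply: lt0r_neq0.
rewrite E /powR gt_eqF // expRN.
set X := expR (12 * delta ^+ 2 * ln T%:R).
have X0 : 0 < X by exact: expR_gt0.
rewrite ler_pdivrMr //.
have c0 : 0 <= 4 / (delta ^+ 2 * p a * X).
  by apply: divr_ge0 => //; rewrite ltW // !mulr_gt0 // exprn_gt0.
apply: le_trans _ (ler_wpM2l c0 hq).
apply: eqle; rewrite /r; field.
by rewrite !lt0r_neq0.
Qed.

Lemma EV_Eh : expected_Valpha T p pi lam alpha = Eh p pi [::] T (psum gV).
Proof.
rewrite /expected_Valpha -(traj_Eh p pi T [::] (psum gV)).
apply: eq_bigr => tau _; congr (_ * _).
by rewrite /Valpha /psum -(psum_tuple gV [::] tau).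
Qed.

Lemma main_bound : expected_Valpha T p pi lam alpha <=
    deff p / ((1 - delta) `^ alpha) *
      (psi (T%:R / deff p + lam / (1 - delta)) - psi (lam / (1 - delta)))
    + (24 * deff p * ln T%:R + d%:R) / (lam `^ alpha)
    + 4 * deff p / (lam `^ alpha * delta ^+ 2 * T%:R `^ (12 * delta ^+ 2)).
Proof.
rewrite EV_Eh.
have hT0 : (size ([::] : history d) + T <= T)%N by [].
apply: le_trans (Eh_le hp hpi hT0 (fun s _ => V_le s)) _.
rewrite Eh_add Eh_scale Eh_sum.
under eq_bigr => a _ do rewrite Eh_add.
set C1 := d%:R * il + Cd * deff p * (psi (T%:R / deff p + L) - psi L).
have E1 : Eh p pi [::] T Phi1 <= C1.
  rewrite -(Eh_const p hpi C1 hT0); apply: (Eh_le hp hpi hT0) => s hs.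
  exact: Phi1_le.
have E2 a : Eh p pi [::] T (Phi2 a) <= K a.
  rewrite -(Eh_const p hpi (K a) hT0); apply: (Eh_le hp hpi hT0) => s hs.
  exact: Phi2_le.
have E3 a : Eh p pi [::] T (Phi3 a) <= 4 / (delta ^+ 2 * p a * T%:R `^ (12 * delta ^+ 2)).
  apply: le_trans (super a hT0) _.
  rewrite /Phi3 psum_nil add0r /W /= mulr0 mulr0 addr0 expR0 mul1r.
  exact: w_sum.
have E23 : \sum_(a < d) (Eh p pi [::] T (Phi2 a) + Eh p pi [::] T (Phi3 a)) <=
   \sum_(a < d) (K a + 4 / (delta ^+ 2 * p a * T%:R `^ (12 * delta ^+ 2))).
  by apply: ler_sum => a _; apply: lerD.
have := lerD E1 (ler_wpM2l il_ge0 E23).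
move=> H; apply: le_trans H _.
set X := T%:R `^ (12 * delta ^+ 2).
have T0 : (0 < T%:R :> R) by rewrite ltr0n; apply: leq_trans hT.
have X0 : 0 < X by apply: powR_gt0.
have dg := d_gt0; have dl := d_lt1.
have sK : \sum_(a < d) (K a + 4 / (delta ^+ 2 * p a * X)) =
    24 * ln T%:R * deff p + 4 / (delta ^+ 2 * X) * deff p.
  rewrite big_split /= /deff !mulr_sumr; congr (_ + _).
  apply: eq_bigr => a _; have := pa_gt0 a => pa.
  by field; rewrite !lt0r_neq0 ?exprn_gt0.
rewrite sK; apply: eqle.
rewrite /C1 /il /Cd /L.
have l0 : lam `^ alpha != 0 by rewrite lt0r_neq0 // powR_gt0.
have d0 : (1 - delta) `^ alpha != 0 by rewrite lt0r_neq0 // powR_gt0 // subr_gt0.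
field; rewrite l0 d0 !lt0r_neq0 ?exprn_gt0 //.
Qed.
End Main.

Unset Implicit Arguments.

Theorem proposition2 (R : realType) (d T : nat) (p : 'I_d -> R)
  (A : nat -> {set 'I_d}) (lam alpha delta : R) (psi : R -> R)
  (pi : history d -> 'I_d -> R) :
  (0 < d)%N -> (2 <= T)%N ->
  (forall a, 0 < p a <= 1) ->
  (forall t, (1 <= t <= T)%N -> A t != finset.set0) ->
  0 < lam -> 0 < alpha -> 0 < delta < 1 ->
  (forall x : R, 0 < x -> is_derive x 1 psi (x `^ (- alpha))) ->
  valid_policy T A pi ->
  expected_Valpha T p pi lam alpha <=
    deff p / ((1 - delta) `^ alpha) *
      (psi (T%:R / deff p + lam / (1 - delta)) - psi (lam / (1 - delta)))
    + (24 * deff p * ln T%:R + d%:R) / (lam `^ alpha)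
    + 4 * deff p / (lam `^ alpha * delta ^+ 2 * T%:R `^ (12 * delta ^+ 2)).
Proof.
move=> hd hT hp hA hlam halpha hdelta hpsi hpi.
exact: (main_bound hd hT hp hlam halpha hdelta hpsi hpi).
Qed.
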